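(* The Cesàro operator $\mathcal C$ maps $VH(\mathbb D)$ into itself and $\mathcal C: VH(\mathbb D)\to VH(\mathbb D)$ is continuous. However, for each $k\in\mathbb N$, $\mathcal C$ does not map $H^\infty_{v_k}$ into $H^\infty_{v_k}$ (in particular it does not act continuously on $H^\infty_{v_k}$).
   Context: $\mathbb D$ is the open unit disc in $\mathbb C$ and $H(\mathbb D)$ is the space of analytic functions on $\mathbb D$ with the topology of uniform convergence on compact subsets. Define $v(z)=1$ if $|z|\le 1-1/e$ and $v(z)=(-\log(1-|z|))^{-1}$ if $1-1/e\le |z|<1$, and $v_k(z)=v(z)^k$ for $k\in\mathbb N$. For $k\in\mathbb N$, $H^\infty_{v_k}=\{f\in H(\mathbb D): \|f\|_{v_k}:=\sup_{z\in\mathbb D} v_k(z)|f(z)|<\infty\}$, a Banach space. $VH(\mathbb D)=\bigcup_{k\in\mathbb N} H^\infty_{v_k}$, endowed with the finest locally convex topology making all inclusions $H^\infty_{v_k}\subset VH(\mathbb D)$ continuous (an (LB)-space). The Cesàro operator is $\mathcal C f(z)=\frac1z\int_0^z\frac{f(\zeta)}{1-\zeta}\,d\zeta$ for $z\in\mathbb D\setminus\{0\}$ and $\mathcal C f(0)=f(0)$, for $f\in H(\mathbb D)$. *)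

(* Defs.v *)
From Stdlib Require Import Reals.
From Coquelicot Require Import Coquelicot.
Open Scope R_scope.

Notation CC := Complex.C.

Definition inD (z : CC) : Prop := Cmod z < 1.

(* H(D): functions (C -> C, only values on D matter) complex-differentiable
   at every point of D (holomorphic = analytic on D). *)
Definition holoD (f : CC -> CC) : Prop :=
  forall z : CC, inD z -> @ex_derive C_AbsRing C_NormedModule f z.

Definition v (z : CC) : R :=
  if Rle_dec (Cmod z) (1 - / exp 1) then 1
  else / (- ln (1 - Cmod z)).

Definition vk (k : nat) (z : CC) : R := (v z) ^ k.

Definition inHk (k : nat) (f : CC -> CC) : Prop :=
  holoD f /\ exists M : R, forall z, inD z -> vk k z * Cmod (f z) <= M.

Definition inVH (f : CC -> CC) : Prop :=
  exists k : nat, (1 <= k)%nat /\ inHk k f.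

Definition fadd (f g : CC -> CC) : CC -> CC := fun z => Cplus (f z) (g z).
Definition fscal (a : CC) (f : CC -> CC) : CC -> CC := fun z => Cmult a (f z).

Definition abs_convex (V : (CC -> CC) -> Prop) : Prop :=
  forall f g a b, V f -> V g -> Cmod a + Cmod b <= 1 ->
    V (fadd (fscal a f) (fscal b g)).

Definition contains_ball (k : nat) (eps : R) (V : (CC -> CC) -> Prop) : Prop :=
  forall g, inHk k g -> (forall z, inD z -> vk k z * Cmod (g z) <= eps) -> V g.

(* Standard base of 0-neighbourhoods of the finest locally convex topology
   on VH(D) making all inclusions H^infty_{v_k} -> VH(D) continuous:
   absolutely convex subsets V of VH(D) such that V meets every
   H^infty_{v_k} in a 0-neighbourhood (i.e. V contains a ball of it). *)
Definition VH_zero_nbhd (V : (CC -> CC) -> Prop) : Prop :=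
  (forall f, V f -> inVH f) /\ abs_convex V /\
  (forall k : nat, (1 <= k)%nat -> exists eps, 0 < eps /\ contains_ball k eps V).

Definition VH_open (O : (CC -> CC) -> Prop) : Prop :=
  (forall f, O f -> inVH f) /\
  forall f, O f -> exists V, VH_zero_nbhd V /\ forall g, V g -> O (fadd f g).

(* The Cesaro operator: Cf(z) = (1/z) int_[0,z] f(zeta)/(1-zeta) dzeta,
   the line integral along the segment [0,z] parametrised by t |-> t z,
   and Cf(0) = f(0). *)
Definition cesaro (f : CC -> CC) : CC -> CC := fun z =>
  if Ceq_dec z (RtoC 0) then f (RtoC 0)
  else Cmult (Cinv z)
         (@RInt C_R_CompleteNormedModule
            (fun t : R => Cmult (Cdiv (f (Cmult (RtoC t) z))
                                      (Cminus (RtoC 1) (Cmult (RtoC t) z))) z)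
            0 1).

(* Main.v *)
Require Import Defs.
From Stdlib Require Import Reals Lra Lia FunctionalExtensionality.
From Coquelicot Require Import Coquelicot.
Open Scope R_scope.

Lemma im_le_Cmod (c : C) : Rabs (Im c) <= Cmod c.
Proof.
  destruct c as [x y]; unfold Cmod; simpl.
  rewrite <- sqrt_Rsqr_abs. apply sqrt_le_1_alt. unfold Rsqr. nra.
Qed.

Lemma Cmod_le_sum (c : C) : Cmod c <= Rabs (Re c) + Rabs (Im c).
Proof.
  destruct c as [x y]; unfold Cmod; simpl.
  rewrite <- (sqrt_Rsqr (Rabs x + Rabs y)) by (pose proof (Rabs_pos x); pose proof (Rabs_pos y); lra).
  apply sqrt_le_1_alt. unfold Rsqr.
  pose proof (Rabs_pos x); pose proof (Rabs_pos y).
  rewrite <- (Rabs_mult x x) at 1 || idtac.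
  assert (x*x = Rabs x * Rabs x) by (rewrite <- Rabs_mult; rewrite Rabs_right; nra).
  assert (y*y = Rabs y * Rabs y) by (rewrite <- Rabs_mult; rewrite Rabs_right; nra).
  simpl. nra.
Qed.

Lemma norm_CR (x : C) : @norm _ C_R_NormedModule x = Cmod x.
Proof.
  destruct x as [a b]. unfold norm; simpl. unfold prod_norm, Cmod; simpl.
  change (norm a) with (Rabs a). change (norm b) with (Rabs b).
  f_equal. rewrite !Rmult_1_r. rewrite <- !Rabs_mult. rewrite !Rabs_right by nra. reflexivity.
Qed.

Lemma ball_of_Cmod (z w : C) (e : R) : Cmod (w - z)%C < e -> ball z e w.
Proof.
  intros H. destruct z as [z1 z2]; destruct w as [w1 w2].
  split; simpl; unfold ball; simpl; unfold AbsRing_ball, abs, minus; simpl; unfold plus, opp; simpl.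
  - pose proof (re_le_Cmod ((w1,w2) - (z1,z2))%C) as H1. simpl in H1. unfold Rminus. lra.
  - pose proof (im_le_Cmod ((w1,w2) - (z1,z2))%C) as H1. simpl in H1. unfold Rminus. lra.
Qed.

Lemma Cmod_of_ball (z w : C) (e : R) : ball z e w -> Cmod (w - z)%C < 2 * e.
Proof.
  intros H. destruct z as [z1 z2]; destruct w as [w1 w2].
  destruct H as [H1 H2]. simpl in H1, H2; unfold ball in H1, H2; simpl in H1, H2; unfold AbsRing_ball, abs, minus in H1, H2; simpl in H1, H2; unfold plus, opp in H1, H2; simpl in H1, H2.
  pose proof (Cmod_le_sum ((w1,w2) - (z1,z2))%C) as H3. simpl in H3. lra.
Qed.

Definition deps (F : C -> C) (z l : C) : Prop :=
  forall eps, 0 < eps -> exists del, 0 < del /\ forall w, Cmod (w - z)%C < del ->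
    Cmod (F w - F z - (w - z) * l)%C <= eps * Cmod (w - z)%C.

Lemma deps_is_derive F z l : deps F z l -> @is_derive C_AbsRing C_NormedModule F z l.
Proof.
  intros H. split.
  - apply is_linear_scal_l.
  - intros x Hx. apply (@is_filter_lim_locally_unique C_AbsRing (AbsRing_NormedModule C_AbsRing)) in Hx. subst x.
    intros eps. destruct (H eps (cond_pos eps)) as [del [Hd H']].
    exists (mkposreal del Hd). intros w Hw.
    apply H'. exact Hw.
Qed.

Lemma is_derive_deps F z l : @is_derive C_AbsRing C_NormedModule F z l -> deps F z l.
Proof.
  intros [_ H] eps Heps.
  assert (Hz : is_filter_lim (locally z) z) by (intros P HP; exact HP).
  destruct (H z Hz (mkposreal eps Heps)) as [d Hd].
  exists d. split. apply cond_pos. intros w Hw.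
  apply Hd in Hw. exact Hw.
Qed.

Definition cont_at (g : C -> C) (z : C) : Prop :=
  forall eps, 0 < eps -> exists del, 0 < del /\ forall w, Cmod (w - z)%C < del ->
    Cmod (g w - g z)%C < eps.

Lemma deps_cont F z l : deps F z l -> cont_at F z.
Proof.
  intros H eps Heps.
  destruct (H 1 ltac:(lra)) as [d [Hd H']].
  exists (Rmin d (eps / (1 + Cmod l + 1))). split.
  { apply Rmin_pos; auto. apply Rdiv_lt_0_compat; auto. pose proof (Cmod_ge_0 l); lra. }
  intros w Hw. specialize (H' w ltac:(pose proof (Rmin_l d (eps / (1 + Cmod l + 1))); lra)).
  assert (E : (F w - F z = (F w - F z - (w - z) * l) + (w - z) * l)%C) by ring.
  rewrite E. eapply Rle_lt_trans. apply Cmod_triangle. rewrite Cmod_mult.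
  pose proof (Cmod_ge_0 l). pose proof (Cmod_ge_0 (w - z)%C).
  assert (Cmod (w - z)%C < eps / (1 + Cmod l + 1)) by (pose proof (Rmin_r d (eps / (1 + Cmod l + 1))); lra).
  apply Rmult_lt_compat_r with (r := 1 + Cmod l + 1) in H2; [|lra].
  unfold Rdiv in H2. rewrite Rmult_assoc, Rinv_l in H2 by lra. nra.
Qed.

Lemma holo_cont f z : holoD f -> inD z -> cont_at f z.
Proof.
  intros H Hz. destruct (H z Hz) as [l Hl]. eapply deps_cont. apply is_derive_deps. exact Hl.
Qed.

Lemma contR (phi : R -> C) t0 :
  (forall eps, 0 < eps -> exists del, 0 < del /\ forall t, Rabs (t - t0) < del -> Cmod (phi t - phi t0)%C < eps) ->
  @continuous R_UniformSpace C_R_CompleteNormedModule phi t0.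
Proof.
  intros H P [e He]. destruct (H e (cond_pos e)) as [d [Hd H']].
  exists (mkposreal d Hd). intros t Ht. apply He. apply ball_of_Cmod. apply H'. exact Ht.
Qed.

Lemma deps_is_derive' F z l : deps F z l -> @is_derive C_AbsRing (AbsRing_NormedModule C_AbsRing) F z l.
Proof.
  intros H. split.
  - apply is_linear_scal_l.
  - intros x Hx. apply (@is_filter_lim_locally_unique C_AbsRing (AbsRing_NormedModule C_AbsRing)) in Hx. subst x.
    intros eps. destruct (H eps (cond_pos eps)) as [del [Hd H']].
    exists (mkposreal del Hd). intros w Hw.
    apply H'. exact Hw.
Qed.

Lemma is_derive_deps' F z l : @is_derive C_AbsRing (AbsRing_NormedModule C_AbsRing) F z l -> deps F z l.
Proof.
  intros [_ H] eps Heps.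
  assert (Hz : is_filter_lim (locally z) z) by (intros P HP; exact HP).
  destruct (H z Hz (mkposreal eps Heps)) as [d Hd].
  exists d. split. apply cond_pos. intros w Hw.
  apply Hd in Hw. exact Hw.
Qed.

Ltac Ceq := apply injective_projections; unfold Cmult, Cplus, Cminus, Copp, RtoC; simpl; field.

Lemma scal_C (r : R) (x : C) : @scal R_Ring C_R_ModuleSpace r x = (RtoC r * x)%C.
Proof. destruct x as [x1 x2]. apply injective_projections; simpl; unfold scal; simpl; unfold mult; simpl; ring. Qed.

Lemma plus_C (x y : C) : @plus C_R_NormedModule x y = (x + y)%C.
Proof. reflexivity. Qed.
Lemma minus_C (x y : C) : @minus C_R_NormedModule x y = (x - y)%C.
Proof. reflexivity. Qed.
Lemma opp_C (x : C) : @opp C_R_NormedModule x = (- x)%C.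
Proof. reflexivity. Qed.

Definition RI (f : R -> C) a b : C := @RInt C_R_CompleteNormedModule f a b.
Definition isRI (f : R -> C) a b l := @is_RInt C_R_NormedModule f a b l.
Definition exRI (f : R -> C) a b := @ex_RInt C_R_NormedModule f a b.

Lemma isRI_Re f a b l : isRI f a b l -> is_RInt (fun t => Re (f t)) a b (Re l).
Proof. intros H. apply (is_RInt_fct_extend_fst (U:=R_NormedModule) (V:=R_NormedModule) f a b l H). Qed.
Lemma isRI_Im f a b l : isRI f a b l -> is_RInt (fun t => Im (f t)) a b (Im l).
Proof. intros H. apply (is_RInt_fct_extend_snd (U:=R_NormedModule) (V:=R_NormedModule) f a b l H). Qed.
Lemma isRI_pair f a b l : is_RInt (fun t => Re (f t)) a b (Re l) -> is_RInt (fun t => Im (f t)) a b (Im l) -> isRI f a b l.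
Proof.
  intros H1 H2. destruct l as [l1 l2].
  apply (is_RInt_fct_extend_pair (U:=R_NormedModule) (V:=R_NormedModule) f a b l1 l2 H1 H2).
Qed.

Lemma isR_scal k (f : R -> R) a b l : is_RInt f a b l -> is_RInt (fun t => k * f t) a b (k * l).
Proof. intros H. exact (is_RInt_scal f a b k l H). Qed.
Lemma isR_eq (f : R -> R) a b l l' : l = l' -> is_RInt f a b l -> is_RInt f a b l'.
Proof. intros ->; auto. Qed.
Lemma isR_minus (f g : R -> R) a b lf lg : is_RInt f a b lf -> is_RInt g a b lg -> is_RInt (fun t => f t - g t) a b (lf - lg).
Proof. intros H1 H2. exact (is_RInt_minus f g a b lf lg H1 H2). Qed.
Lemma isR_plus (f g : R -> R) a b lf lg : is_RInt f a b lf -> is_RInt g a b lg -> is_RInt (fun t => f t + g t) a b (lf + lg).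
Proof. intros H1 H2. exact (is_RInt_plus f g a b lf lg H1 H2). Qed.

Lemma isRI_Cmult_r f a b l c : isRI f a b l -> isRI (fun t => (f t * c)%C) a b (l * c)%C.
Proof.
  intros H. pose proof (isRI_Re _ _ _ _ H) as H1. pose proof (isRI_Im _ _ _ _ H) as H2.
  apply isRI_pair.
  - apply (is_RInt_ext (fun t => Re c * Re (f t) - Im c * Im (f t))).
    { intros; unfold Re, Im, Cmult; simpl; ring. }
    eapply isR_eq; [| apply isR_minus; apply isR_scal; eauto].
    unfold Re, Im, Cmult; simpl; ring.
  - apply (is_RInt_ext (fun t => Im c * Re (f t) + Re c * Im (f t))).
    { intros; unfold Re, Im, Cmult; simpl; ring. }
    eapply isR_eq; [| apply isR_plus; apply isR_scal; eauto].
    unfold Re, Im, Cmult; simpl; ring.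
Qed.

Lemma isRI_Cmult_l f a b l c : isRI f a b l -> isRI (fun t => (c * f t)%C) a b (c * l)%C.
Proof.
  intros H. rewrite Cmult_comm. apply (is_RInt_ext (fun t => (f t * c)%C)).
  { intros; apply Cmult_comm. } apply isRI_Cmult_r; auto.
Qed.

Lemma isRI_plus f g a b lf lg : isRI f a b lf -> isRI g a b lg -> isRI (fun t => (f t + g t)%C) a b (lf + lg)%C.
Proof. intros H1 H2. exact (is_RInt_plus f g a b lf lg H1 H2). Qed.
Lemma isRI_minus f g a b lf lg : isRI f a b lf -> isRI g a b lg -> isRI (fun t => (f t - g t)%C) a b (lf - lg)%C.
Proof. intros H1 H2. exact (is_RInt_minus f g a b lf lg H1 H2). Qed.
Lemma isRI_ext f g a b l : (forall x, Rmin a b < x < Rmax a b -> f x = g x) -> isRI f a b l -> isRI g a b l.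
Proof. intros; eapply is_RInt_ext; eauto. Qed.

Lemma isRI_const c a b : isRI (fun _ => c) a b (RtoC (b - a) * c)%C.
Proof. unfold isRI. rewrite <- scal_C. exact (is_RInt_const (V:=C_R_NormedModule) a b c). Qed.

Lemma isRI_RtoC f a b l : is_RInt f a b l -> isRI (fun t => RtoC (f t)) a b (RtoC l).
Proof.
  intros H. apply isRI_pair; simpl. exact H.
  apply (is_RInt_ext (fun _ => 0)). { intros; reflexivity. }
  eapply isR_eq; [| exact (is_RInt_const (V:=R_NormedModule) a b 0)].
  unfold scal; simpl; unfold mult; simpl; ring.
Qed.

Lemma isRI_unique f a b l : isRI f a b l -> RI f a b = l.
Proof. intros H. exact (is_RInt_unique (V:=C_R_CompleteNormedModule) f a b l H). Qed.
Lemma RI_correct f a b : exRI f a b -> isRI f a b (RI f a b).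
Proof. intros H. exact (RInt_correct (V:=C_R_CompleteNormedModule) f a b H). Qed.

Lemma isRI_norm f a b l M : a <= b -> (forall x, a <= x <= b -> Cmod (f x) <= M) -> isRI f a b l -> Cmod l <= (b - a) * M.
Proof.
  intros Hab H Hl. rewrite <- norm_CR. apply (norm_RInt_le_const (V:=C_R_NormedModule) f a b l M Hab); auto.
  intros; rewrite norm_CR; auto.
Qed.

Lemma is_RInt_id01 : is_RInt (fun t => t) 0 1 (1/2).
Proof.
  eapply isR_eq; [| apply (is_RInt_derive (V:=R_CompleteNormedModule) (fun t => t*t/2) (fun t => t))].
  unfold minus, plus, opp; simpl; field.
  - intros x _. auto_derive; auto. field.
  - intros x _. apply continuous_id.
Qed.

Definition segf (g : C -> C) (a b : C) (t : R) : C := (g (a + RtoC t * (b - a)) * (b - a))%C.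
Definition seg g a b : C := RI (segf g a b) 0 1.
Definition mid (a b : C) : C := (RtoC (/2) * (a + b))%C.

Lemma Cmod_RtoC_mult (t : R) (x : C) : Cmod (RtoC t * x)%C = Rabs t * Cmod x.
Proof. rewrite Cmod_mult, Cmod_R. reflexivity. Qed.

Lemma lin_int α β a b : isRI (fun t => ((α + β * (a + RtoC t * (b - a))) * (b - a))%C) 0 1
   (α*(b-a) + β*(b*b - a*a) * RtoC (/2))%C.
Proof.
  set (P := ((α + β * a) * (b - a))%C). set (Q := (β * (b - a) * (b - a))%C).
  apply (isRI_ext (fun t => (P + RtoC t * Q)%C)).
  { intros; unfold P, Q; Ceq. }
  assert (H := isRI_plus _ _ _ _ _ _ (isRI_const P 0 1) (isRI_Cmult_r _ _ _ _ Q (isRI_RtoC _ _ _ _ is_RInt_id01))).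
  eapply isRI_ext; [| eapply (eq_ind _ (fun l => isRI _ 0 1 l) H)].
  - intros; simpl. reflexivity.
  - unfold P, Q. Ceq.
Qed.

Lemma seg_approx g a b α β M : exRI (segf g a b) 0 1 ->
  (forall t, 0 <= t <= 1 -> Cmod (g (a + RtoC t * (b - a)) - (α + β * (a + RtoC t * (b - a))))%C <= M) ->
  Cmod (seg g a b - (α*(b-a) + β*(b*b - a*a) * RtoC (/2)))%C <= M * Cmod (b - a)%C.
Proof.
  intros Hex HM.
  assert (H := isRI_minus _ _ _ _ _ _ (RI_correct _ _ _ Hex) (lin_int α β a b)).
  eapply Rle_trans. eapply isRI_norm; [| | exact H]. lra.
  - intros x Hx. unfold segf.
    replace ((g (a + RtoC x * (b - a)) * (b - a) - (α + β * (a + RtoC x * (b - a))) * (b - a)))%C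
      with ((g (a + RtoC x * (b - a)) - (α + β * (a + RtoC x * (b - a)))) * (b - a))%C by ring.
    rewrite Cmod_mult. apply Rmult_le_compat_r. apply Cmod_ge_0. apply HM; auto.
  - lra.
Qed.

Lemma seg_inD a b t : inD a -> inD b -> 0 <= t <= 1 -> inD (a + RtoC t * (b - a))%C.
Proof.
  unfold inD; intros Ha Hb Ht.
  replace (a + RtoC t * (b - a))%C with (RtoC (1 - t) * a + RtoC t * b)%C by Ceq.
  eapply Rle_lt_trans. apply Cmod_triangle. rewrite !Cmod_RtoC_mult.
  rewrite !Rabs_right by lra. destruct (Req_dec t 0). subst; lra. assert (t * Cmod b < t * 1) by (apply Rmult_lt_compat_l; lra). assert ((1 - t) * Cmod a <= (1 - t) * 1) by (apply Rmult_le_compat_l; lra). lra.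
Qed.

Lemma seg_ex g a b : (forall t, 0 <= t <= 1 -> cont_at g (a + RtoC t * (b - a))%C) -> exRI (segf g a b) 0 1.
Proof.
  intros H. apply (ex_RInt_continuous (V:=C_R_CompleteNormedModule)).
  intros t0 Ht0. rewrite Rmin_left, Rmax_right in Ht0 by lra.
  apply contR. intros eps Heps.
  set (K := Cmod (b - a)%C + 1).
  assert (HK : 0 < K) by (unfold K; pose proof (Cmod_ge_0 (b-a)%C); lra).
  destruct (H t0 Ht0 (eps / K) ltac:(apply Rdiv_lt_0_compat; auto)) as [d [Hd Hc]].
  exists (d / K). split. apply Rdiv_lt_0_compat; auto.
  intros t Ht. unfold segf.
  replace (g (a + RtoC t * (b - a)) * (b - a) - g (a + RtoC t0 * (b - a)) * (b - a))%C
    with ((g (a + RtoC t * (b - a)) - g (a + RtoC t0 * (b - a))) * (b - a))%C by ring.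
  rewrite Cmod_mult.
  assert (Hw : Cmod (a + RtoC t * (b - a) - (a + RtoC t0 * (b - a)))%C < d).
  { replace (a + RtoC t * (b - a) - (a + RtoC t0 * (b - a)))%C with (RtoC (t - t0) * (b - a))%C by Ceq.
    rewrite Cmod_RtoC_mult.
    pose proof (Cmod_ge_0 (b - a)%C). pose proof (Rabs_pos (t - t0)).
    assert (Rabs (t - t0) * K < d).
    { apply Rmult_lt_compat_r with (r := K) in Ht; [|auto]. unfold Rdiv in Ht. rewrite Rmult_assoc, Rinv_l in Ht by lra. lra. }
    unfold K in H2. nra. }
  specialize (Hc _ Hw). pose proof (Cmod_ge_0 (b - a)%C).
  pose proof (Cmod_ge_0 (g (a + RtoC t * (b - a)) - g (a + RtoC t0 * (b - a)))%C).
  apply Rle_lt_trans with (eps / K * Cmod (b - a)%C).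
  apply Rmult_le_compat_r; lra.
  unfold K. apply Rlt_le_trans with (eps / K * K). apply Rmult_lt_compat_l. apply Rdiv_lt_0_compat; auto. unfold K; lra.
  unfold Rdiv. rewrite Rmult_assoc, Rinv_l by lra. lra.
Qed.

Lemma seg_split g a b : exRI (segf g a b) 0 1 -> seg g a b = (seg g a (mid a b) + seg g (mid a b) b)%C.
Proof.
  intros H. set (phi := segf g a b).
  assert (e1 : exRI phi 0 (/2)) by (apply (ex_RInt_Chasles_1 (V:=C_R_CompleteNormedModule) phi 0 (/2) 1); [lra | exact H]).
  assert (e2 : exRI phi (/2) 1) by (apply (ex_RInt_Chasles_2 (V:=C_R_CompleteNormedModule) phi 0 (/2) 1); [lra | exact H]).
  unfold seg. fold phi. unfold RI at 1.
  rewrite <- (RInt_Chasles (V:=C_R_CompleteNormedModule) phi 0 (/2) 1 e1 e2).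
  fold (RI phi 0 (/2)). fold (RI phi (/2) 1).
  assert (H1 : isRI (fun y => scal (/2) (phi (/2*y+0))) 0 1 (RI phi 0 (/2))).
  { apply (is_RInt_comp_lin (V:=C_R_NormedModule)). replace (/2*0+0) with 0 by ring. replace (/2*1+0) with (/2) by field. apply RI_correct; auto. }
  assert (H2 : isRI (fun y => scal (/2) (phi (/2*y+/2))) 0 1 (RI phi (/2) 1)).
  { apply (is_RInt_comp_lin (V:=C_R_NormedModule)). replace (/2*0+/2) with (/2) by ring. replace (/2*1+/2) with 1 by field. apply RI_correct; auto. }
  rewrite <- (isRI_unique _ _ _ _ H1), <- (isRI_unique _ _ _ _ H2).
  rewrite plus_C. f_equal.
  - unfold RI. apply (RInt_ext (V:=C_R_CompleteNormedModule)). intros y _. rewrite scal_C. unfold phi, segf, mid.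
    replace (a + RtoC (/2*y+0) * (b - a))%C with (a + RtoC y * (RtoC (/2) * (a + b) - a))%C by Ceq.
    Ceq.
  - unfold RI. apply (RInt_ext (V:=C_R_CompleteNormedModule)). intros y _. rewrite scal_C. unfold phi, segf, mid.
    replace (a + RtoC (/2*y+/2) * (b - a))%C with (RtoC (/2) * (a + b) + RtoC y * (b - RtoC (/2) * (a + b)))%C by Ceq.
    Ceq.
Qed.

Lemma seg_rev g a b : exRI (segf g a b) 0 1 -> seg g b a = (- seg g a b)%C.
Proof.
  intros H. set (phi := segf g a b).
  assert (e1 : exRI phi 1 0) by (apply (ex_RInt_swap (V:=C_R_NormedModule)); exact H).
  assert (H1 : isRI (fun y => scal (-1) (phi (-1*y+1))) 0 1 (RI phi 1 0)).
  { apply (is_RInt_comp_lin (V:=C_R_NormedModule)). replace (-1*0+1) with 1 by ring. replace (-1*1+1) with 0 by ring. apply RI_correct; auto. }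
  pose proof (opp_RInt_swap (V:=C_R_CompleteNormedModule) phi 0 1 H) as E.
  unfold seg. fold phi. transitivity (RI phi 1 0).
  2:{ unfold RI. rewrite <- E. reflexivity. }
  rewrite <- (isRI_unique _ _ _ _ H1).
  unfold RI. apply (RInt_ext (V:=C_R_CompleteNormedModule)). intros y _. rewrite scal_C. unfold phi, segf.
  replace (a + RtoC (-1*y+1) * (b - a))%C with (b + RtoC y * (a - b))%C by Ceq.
  Ceq.
Qed.

Definition T3 : Type := (C * C * C)%type.
Definition tri (g : C -> C) (t : T3) : C :=
  let '(a, b, c) := t in (seg g a b + seg g b c + seg g c a)%C.
Definition sub (i : nat) (t : T3) : T3 :=
  let '(a, b, c) := t in
  match i with
  | 0%nat => (a, mid a b, mid c a)
  | 1%nat => (mid a b, b, mid b c)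
  | 2%nat => (mid c a, mid b c, c)
  | _ => (mid a b, mid b c, mid c a)
  end.
Definition step (g : C -> C) (t : T3) : T3 :=
  if Rle_dec (Cmod (tri g t) / 4) (Cmod (tri g (sub 0 t))) then sub 0 t
  else if Rle_dec (Cmod (tri g t) / 4) (Cmod (tri g (sub 1 t))) then sub 1 t
  else if Rle_dec (Cmod (tri g t) / 4) (Cmod (tri g (sub 2 t))) then sub 2 t
  else sub 3 t.

Definition holoE (g : C -> C) := forall z, inD z -> exists l, deps g z l.

Lemma holoE_cont g z : holoE g -> inD z -> cont_at g z.
Proof. intros H Hz. destruct (H z Hz) as [l Hl]. eapply deps_cont; eauto. Qed.

Lemma ex_D g a b : holoE g -> inD a -> inD b -> exRI (segf g a b) 0 1.
Proof.
  intros Hg Ha Hb. apply seg_ex. intros t Ht. apply holoE_cont; auto. apply seg_inD; auto.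
Qed.

Lemma mid_eq a b : mid a b = (a + RtoC (/2) * (b - a))%C.
Proof. unfold mid; Ceq. Qed.

Lemma mid_inD a b : inD a -> inD b -> inD (mid a b).
Proof. intros; rewrite mid_eq; apply seg_inD; auto; lra. Qed.

Lemma tri_split g a b c : holoE g -> inD a -> inD b -> inD c ->
  tri g (a, b, c) = (tri g (sub 0 (a,b,c)) + tri g (sub 1 (a,b,c)) + tri g (sub 2 (a,b,c)) + tri g (sub 3 (a,b,c)))%C.
Proof.
  intros Hg Ha Hb Hc. simpl.
  pose proof (mid_inD a b Ha Hb). pose proof (mid_inD b c Hb Hc). pose proof (mid_inD c a Hc Ha).
  rewrite (seg_split g a b) by (apply ex_D; auto).
  rewrite (seg_split g b c) by (apply ex_D; auto).
  rewrite (seg_split g c a) by (apply ex_D; auto).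
  rewrite (seg_rev g (mid a b) (mid c a)) by (apply ex_D; auto).
  rewrite (seg_rev g (mid b c) (mid a b)) by (apply ex_D; auto).
  rewrite (seg_rev g (mid c a) (mid b c)) by (apply ex_D; auto).
  ring.
Qed.

Definition bnd (r : R) (t : T3) : Prop :=
  let '(a, b, c) := t in Cmod a <= r /\ Cmod b <= r /\ Cmod c <= r.
Definition small (d : R) (t : T3) : Prop :=
  let '(a, b, c) := t in Cmod (b - a)%C <= d /\ Cmod (c - b)%C <= d /\ Cmod (a - c)%C <= d.
Definition v1 (t : T3) : C := let '(a, b, c) := t in a.

Lemma bnd_inD r t : r < 1 -> bnd r t -> let '(a,b,c) := t in inD a /\ inD b /\ inD c.
Proof. destruct t as [[a b] c]. unfold bnd, inD. intros; lra. Qed.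

Lemma Cmod_mid a b : Cmod (mid a b) <= (Cmod a + Cmod b) / 2.
Proof.
  unfold mid. rewrite Cmod_RtoC_mult. rewrite Rabs_right by lra.
  pose proof (Cmod_triangle a b). lra.
Qed.

Lemma mid_bnd r a b : Cmod a <= r -> Cmod b <= r -> Cmod (mid a b) <= r.
Proof. intros. pose proof (Cmod_mid a b). lra. Qed.

Lemma sub_bnd r i t : bnd r t -> bnd r (sub i t).
Proof.
  destruct t as [[a b] c]. unfold bnd. intros [Ha [Hb Hc]].
  destruct i as [|[|[|i]]]; simpl; repeat split; auto; apply mid_bnd; auto.
Qed.

Lemma half_mod x y : Cmod x <= y -> Cmod (RtoC (/2) * x)%C <= y / 2.
Proof. intros H. rewrite Cmod_RtoC_mult, Rabs_right by lra. lra. Qed.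

Lemma sub_small d i t : small d t -> small (d / 2) (sub i t).
Proof.
  destruct t as [[a b] c]. unfold small. intros [H1 [H2 H3]].
  destruct i as [|[|[|i]]]; simpl; unfold mid.
  - repeat split.
    + replace (RtoC (/2) * (a + b) - a)%C with (RtoC (/2) * (b - a))%C by Ceq. apply half_mod; auto.
    + replace (RtoC (/2) * (c + a) - RtoC (/2) * (a + b))%C with (RtoC (/2) * (c - b))%C by Ceq. apply half_mod; auto.
    + replace (a - RtoC (/2) * (c + a))%C with (RtoC (/2) * (a - c))%C by Ceq. apply half_mod; auto.
  - repeat split.
    + replace (b - RtoC (/2) * (a + b))%C with (RtoC (/2) * (b - a))%C by Ceq. apply half_mod; auto.
    + replace (RtoC (/2) * (b + c) - b)%C with (RtoC (/2) * (c - b))%C by Ceq. apply half_mod; auto.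
    + replace (RtoC (/2) * (a + b) - RtoC (/2) * (b + c))%C with (RtoC (/2) * (a - c))%C by Ceq. apply half_mod; auto.
  - repeat split.
    + replace (RtoC (/2) * (b + c) - RtoC (/2) * (c + a))%C with (RtoC (/2) * (b - a))%C by Ceq. apply half_mod; auto.
    + replace (c - RtoC (/2) * (b + c))%C with (RtoC (/2) * (c - b))%C by Ceq. apply half_mod; auto.
    + replace (RtoC (/2) * (c + a) - c)%C with (RtoC (/2) * (a - c))%C by Ceq. apply half_mod; auto.
  - repeat split.
    + replace (RtoC (/2) * (b + c) - RtoC (/2) * (a + b))%C with (RtoC (/2) * (c - a))%C by Ceq.
      apply half_mod. replace (c - a)%C with (- (a - c))%C by ring. rewrite Cmod_opp. auto.
    + replace (RtoC (/2) * (c + a) - RtoC (/2) * (b + c))%C with (RtoC (/2) * (a - b))%C by Ceq.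
      apply half_mod. replace (a - b)%C with (- (b - a))%C by ring. rewrite Cmod_opp. auto.
    + replace (RtoC (/2) * (a + b) - RtoC (/2) * (c + a))%C with (RtoC (/2) * (b - c))%C by Ceq.
      apply half_mod. replace (b - c)%C with (- (c - b))%C by ring. rewrite Cmod_opp. auto.
Qed.

Lemma sub_v1 d i t : small d t -> 0 <= d -> Cmod (v1 (sub i t) - v1 t)%C <= d.
Proof.
  destruct t as [[a b] c]. unfold small. intros [H1 [H2 H3]] Hd.
  destruct i as [|[|[|i]]]; simpl; unfold mid.
  - replace (a - a)%C with (RtoC 0) by ring. rewrite Cmod_0. auto.
  - replace (RtoC (/2) * (a + b) - a)%C with (RtoC (/2) * (b - a))%C by Ceq.
    pose proof (half_mod _ _ H1). lra.
  - replace (RtoC (/2) * (c + a) - a)%C with (RtoC (/2) * (- (a - c)))%C by Ceq.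
    rewrite Cmod_RtoC_mult, Cmod_opp, Rabs_right by lra. lra.
  - replace (RtoC (/2) * (a + b) - a)%C with (RtoC (/2) * (b - a))%C by Ceq.
    pose proof (half_mod _ _ H1). lra.
Qed.

Lemma step_sub g t : exists i, step g t = sub i t.
Proof.
  unfold step. destruct (Rle_dec _ _). eauto. destruct (Rle_dec _ _). eauto. destruct (Rle_dec _ _); eauto.
Qed.

Lemma step_ge g t r : holoE g -> r < 1 -> bnd r t -> Cmod (tri g t) / 4 <= Cmod (tri g (step g t)).
Proof.
  intros Hg Hr Hb.
  pose proof (bnd_inD r t Hr Hb) as Hin. destruct t as [[a b] c]. destruct Hin as [Ha [Hb' Hc]].
  unfold step. destruct (Rle_dec _ _); auto. destruct (Rle_dec _ _); auto. destruct (Rle_dec _ _); auto.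
  rewrite (tri_split g a b c Hg Ha Hb' Hc) at 1.
  set (x0 := tri g (sub 0 (a,b,c))) in *. set (x1 := tri g (sub 1 (a,b,c))) in *.
  set (x2 := tri g (sub 2 (a,b,c))) in *. set (x3 := tri g (sub 3 (a,b,c))) in *.
  rewrite (tri_split g a b c Hg Ha Hb' Hc) in n, n0, n1. fold x0 x1 x2 x3 in n, n0, n1.
  pose proof (Cmod_triangle (x0 + x1 + x2)%C x3). pose proof (Cmod_triangle (x0 + x1)%C x2).
  pose proof (Cmod_triangle x0 x1). lra.
Qed.

Lemma pow2_gt0 n : 0 < 2 ^ n.
Proof. apply pow_lt; lra. Qed.

Lemma pow2_ge_n n : INR n <= 2 ^ n.
Proof.
  induction n. simpl; lra. rewrite S_INR. simpl.
  pose proof (pow_R1_Rle 2 n ltac:(lra)). lra.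
Qed.

Lemma pow2_mono n m : (n <= m)%nat -> 2 ^ n <= 2 ^ m.
Proof. intros H. apply Rle_pow; lra || auto. Qed.

Lemma div_pow_mono K n m : 0 <= K -> (n <= m)%nat -> K / 2 ^ m <= K / 2 ^ n.
Proof.
  intros HK H. pose proof (pow2_mono n m H). pose proof (pow2_gt0 n). pose proof (pow2_gt0 m).
  unfold Rdiv. apply Rmult_le_compat_l; auto. apply Rinv_le_contravar; auto.
Qed.

Lemma small_pow K eps : 0 <= K -> 0 < eps -> exists N, forall n, (N <= n)%nat -> K / 2 ^ n < eps.
Proof.
  intros HK He.
  destruct (archimed_cor1 (eps / (K + 1))) as [N [HN HN0]].
  { apply Rdiv_lt_0_compat; lra. }
  exists N. intros n Hn. eapply Rle_lt_trans. apply div_pow_mono; eauto.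
  pose proof (pow2_ge_n N). pose proof (pow2_gt0 N).
  assert (HNp : 0 < INR N) by (apply lt_0_INR; lia).
  apply Rle_lt_trans with (K / INR N).
  { unfold Rdiv. apply Rmult_le_compat_l; auto. apply Rinv_le_contravar; auto. }
  apply Rle_lt_trans with ((K+1) / INR N).
  { unfold Rdiv. apply Rmult_le_compat_r. left; apply Rinv_0_lt_compat; auto. lra. }
  apply Rmult_lt_compat_l with (r := K + 1) in HN; [|lra].
  unfold Rdiv in *. replace ((K + 1) * (eps * / (K + 1))) with eps in HN by (field; lra). lra.
Qed.

Lemma le_of_pow x y K : 0 <= K -> (forall n, x <= y + K / 2 ^ n) -> x <= y.
Proof.
  intros HK H. destruct (Rle_dec x y) as [h|h]; auto. exfalso.
  destruct (small_pow K (x - y) HK ltac:(lra)) as [N HN].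
  specialize (HN N (Nat.le_refl N)). specialize (H N). lra.
Qed.

Lemma lim_exists (u : nat -> R) K : 0 <= K -> (forall n k, Rabs (u (n + k)%nat - u n) <= K / 2 ^ n) ->
  exists x, forall n, Rabs (x - u n) <= K / 2 ^ n.
Proof.
  intros HK H.
  assert (Hc : Cauchy_crit u).
  { intros eps He. destruct (small_pow K eps HK He) as [N HN]. exists N.
    intros n m Hn Hm. unfold R_dist.
    destruct (Nat.le_ge_cases n m) as [h|h].
    - replace m with (n + (m - n))%nat by lia. rewrite Rabs_minus_sym.
      eapply Rle_lt_trans. apply H. apply HN; auto.
    - replace n with (m + (n - m))%nat by lia.
      eapply Rle_lt_trans. apply H. apply HN; auto. }
  destruct (Rcomplete.R_complete u Hc) as [x Hx]. exists x. intros n.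
  destruct (Rle_dec (Rabs (x - u n)) (K / 2 ^ n)) as [h|h]; auto. exfalso.
  set (del := Rabs (x - u n) - K / 2 ^ n).
  destruct (Hx del ltac:(unfold del; lra)) as [N HN].
  specialize (HN (Nat.max N n) (Nat.le_max_l N n)). unfold R_dist in HN.
  specialize (H n (Nat.max N n - n)%nat). replace (n + (Nat.max N n - n))%nat with (Nat.max N n) in H by lia.
  pose proof (Rabs_triang (x - u (Nat.max N n)) (u (Nat.max N n) - u n)).
  replace (x - u (Nat.max N n) + (u (Nat.max N n) - u n)) with (x - u n) in H0 by ring.
  rewrite Rabs_minus_sym in HN. unfold del in HN. lra.
Qed.

Definition Tseq g t0 n := Nat.iter n (step g) t0.

Lemma Tseq_S g t0 n : Tseq g t0 (S n) = step g (Tseq g t0 n).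
Proof. reflexivity. Qed.

Lemma Tseq_bnd g t0 r n : bnd r t0 -> bnd r (Tseq g t0 n).
Proof.
  intros H. induction n. exact H. rewrite Tseq_S. destruct (step_sub g (Tseq g t0 n)) as [i ->].
  apply sub_bnd; auto.
Qed.

Lemma Tseq_small g t0 d n : small d t0 -> small (d / 2 ^ n) (Tseq g t0 n).
Proof.
  intros H. induction n. simpl. replace (d / 1) with d by field. exact H.
  rewrite Tseq_S. destruct (step_sub g (Tseq g t0 n)) as [i ->].
  replace (d / 2 ^ S n) with (d / 2 ^ n / 2) by (simpl; field; pose proof (pow2_gt0 n); lra).
  apply sub_small; auto.
Qed.

Lemma Tseq_tri g t0 r n : holoE g -> r < 1 -> bnd r t0 ->
  Cmod (tri g t0) / (2 ^ n * 2 ^ n) <= Cmod (tri g (Tseq g t0 n)).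
Proof.
  intros Hg Hr Hb. induction n. simpl. lra.
  rewrite Tseq_S. eapply Rle_trans; [| apply (step_ge g _ r); auto; apply Tseq_bnd; auto].
  replace (Cmod (tri g t0) / (2 ^ S n * 2 ^ S n)) with (Cmod (tri g t0) / (2 ^ n * 2 ^ n) / 4)
    by (simpl; field; pose proof (pow2_gt0 n); lra).
  lra.
Qed.

Lemma Tseq_v1_step g t0 d n : small d t0 -> 0 <= d ->
  Cmod (v1 (Tseq g t0 (S n)) - v1 (Tseq g t0 n))%C <= d / 2 ^ n.
Proof.
  intros H Hd. rewrite Tseq_S. destruct (step_sub g (Tseq g t0 n)) as [i ->].
  apply sub_v1. apply Tseq_small; auto. unfold Rdiv. apply Rmult_le_pos; auto.
  left; apply Rinv_0_lt_compat, pow2_gt0.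
Qed.

Lemma Tseq_v1 g t0 d n k : small d t0 -> 0 <= d ->
  Cmod (v1 (Tseq g t0 (n + k)) - v1 (Tseq g t0 n))%C <= 2 * d / 2 ^ n - 2 * d / 2 ^ (n + k).
Proof.
  intros H Hd. induction k.
  - rewrite Nat.add_0_r. replace (v1 (Tseq g t0 n) - v1 (Tseq g t0 n))%C with (RtoC 0) by ring.
    rewrite Cmod_0. lra.
  - replace (n + S k)%nat with (S (n + k)) by lia.
    replace (v1 (Tseq g t0 (S (n + k))) - v1 (Tseq g t0 n))%C with
      ((v1 (Tseq g t0 (S (n + k))) - v1 (Tseq g t0 (n + k))) + (v1 (Tseq g t0 (n + k)) - v1 (Tseq g t0 n)))%C by ring.
    eapply Rle_trans. apply Cmod_triangle.
    pose proof (Tseq_v1_step g t0 d (n + k) H Hd).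
    replace (2 * d / 2 ^ S (n + k)) with (d / 2 ^ (n + k)) by (simpl; field; pose proof (pow2_gt0 (n + k)); lra).
    lra.
Qed.

Lemma Cmod_sym x y : Cmod (x - y)%C = Cmod (y - x)%C.
Proof. replace (x - y)%C with (- (y - x))%C by ring. apply Cmod_opp. Qed.

Lemma side_bound g zs l eps del x y A0 dn : holoE g -> inD x -> inD y ->
  (forall w, Cmod (w - zs)%C < del -> Cmod (g w - g zs - (w - zs) * l)%C <= eps * Cmod (w - zs)%C) ->
  0 <= eps -> Cmod (x - A0)%C <= dn -> Cmod (y - x)%C <= dn -> Cmod (A0 - zs)%C <= 4 * dn -> 6 * dn < del ->
  Cmod (seg g x y - ((g zs - zs * l) * (y - x) + l * (y * y - x * x) * RtoC (/2)))%C <= eps * (6 * dn) * dn.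
Proof.
  intros Hg Hx Hy Hd He H1 H2 H3 H4.
  eapply Rle_trans. apply (seg_approx g x y _ _ (eps * (6 * dn))). apply ex_D; auto.
  - intros t Ht.
    replace (g (x + RtoC t * (y - x)) - (g zs - zs * l + l * (x + RtoC t * (y - x))))%C
      with (g (x + RtoC t * (y - x)) - g zs - (x + RtoC t * (y - x) - zs) * l)%C by ring.
    assert (Hp : Cmod (x + RtoC t * (y - x) - zs)%C <= 6 * dn).
    { replace (x + RtoC t * (y - x) - zs)%C with (RtoC t * (y - x) + (x - A0) + (A0 - zs))%C by ring.
      eapply Rle_trans. apply Cmod_triangle. eapply Rle_trans. apply Rplus_le_compat_r. apply Cmod_triangle.
      rewrite Cmod_RtoC_mult, Rabs_right by lra. pose proof (Cmod_ge_0 (y - x)%C).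
      assert (t * Cmod (y - x)%C <= dn) by nra. lra. }
    eapply Rle_trans. apply Hd. lra. apply Rmult_le_compat_l; auto.
  - apply Rmult_le_compat_l; auto. apply Rmult_le_pos; auto. pose proof (Cmod_ge_0 (y - x)%C). lra.
Qed.

Lemma Re_minus_le x y : Rabs (Re x - Re y) <= Cmod (x - y)%C.
Proof. replace (Re x - Re y) with (Re (x - y)%C) by (unfold Re, Cminus, Cplus, Copp; simpl; ring). apply re_le_Cmod. Qed.
Lemma Im_minus_le x y : Rabs (Im x - Im y) <= Cmod (x - y)%C.
Proof. replace (Im x - Im y) with (Im (x - y)%C) by (unfold Im, Cminus, Cplus, Copp; simpl; ring). apply im_le_Cmod. Qed.

Theorem goursat g a b c : holoE g -> inD a -> inD b -> inD c -> tri g (a, b, c) = RtoC 0.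
Proof.
  intros Hg Ha Hb Hc.
  set (t0 := (a, b, c)).
  set (r := Rmax (Cmod a) (Rmax (Cmod b) (Cmod c))).
  assert (Hr : r < 1).
  { unfold r, inD in *. apply Rmax_lub_lt; auto. apply Rmax_lub_lt; auto. }
  assert (Hbnd : bnd r t0).
  { unfold t0, bnd, r. repeat split. apply Rmax_l. eapply Rle_trans; [|apply Rmax_r]. apply Rmax_l.
    eapply Rle_trans; [|apply Rmax_r]. apply Rmax_r. }
  set (d := Cmod (b - a)%C + Cmod (c - b)%C + Cmod (a - c)%C).
  pose proof (Cmod_ge_0 (b - a)%C). pose proof (Cmod_ge_0 (c - b)%C). pose proof (Cmod_ge_0 (a - c)%C).
  assert (Hd0 : 0 <= d) by (unfold d; lra).
  assert (Hsm : small d t0) by (unfold small, t0, d; repeat split; lra).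
  set (A := fun n => v1 (Tseq g t0 n)).
  assert (HA : forall n k, Cmod (A (n + k)%nat - A n)%C <= 2 * d / 2 ^ n).
  { intros n k. unfold A. eapply Rle_trans. apply (Tseq_v1 g t0 d); auto.
    pose proof (pow2_gt0 (n + k)). assert (0 <= 2 * d / 2 ^ (n + k)) by (unfold Rdiv; apply Rmult_le_pos; [lra | left; apply Rinv_0_lt_compat; auto]). lra. }
  destruct (lim_exists (fun n => Re (A n)) (2 * d) ltac:(lra)) as [xs Hxs].
  { intros n k. eapply Rle_trans. apply Re_minus_le. apply HA. }
  destruct (lim_exists (fun n => Im (A n)) (2 * d) ltac:(lra)) as [ys Hys].
  { intros n k. eapply Rle_trans. apply Im_minus_le. apply HA. }
  set (zs := (xs, ys) : C).
  assert (Hz : forall n, Cmod (A n - zs)%C <= 4 * d / 2 ^ n).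
  { intros n. rewrite Cmod_sym. eapply Rle_trans. apply Cmod_le_sum.
    specialize (Hxs n). specialize (Hys n). simpl in Hxs, Hys.
    replace (Re (zs - A n)%C) with (xs - Re (A n)) by (unfold zs, Re, Cminus, Cplus, Copp; simpl; ring).
    replace (Im (zs - A n)%C) with (ys - Im (A n)) by (unfold zs, Im, Cminus, Cplus, Copp; simpl; ring).
    unfold Rdiv in *. lra. }
  assert (HAr : forall n, Cmod (A n) <= r).
  { intros n. pose proof (Tseq_bnd g t0 r n Hbnd). unfold A. destruct (Tseq g t0 n) as [[a' b'] c']. simpl in *. tauto. }
  assert (Hzs : inD zs).
  { unfold inD. apply Rle_lt_trans with r; auto. apply le_of_pow with (4 * d). lra.
    intros n. replace zs with (A n - (A n - zs))%C by ring. eapply Rle_trans. apply Cmod_triangle.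
    rewrite Cmod_opp. specialize (Hz n). specialize (HAr n). lra. }
  set (L := Cmod (tri g t0)).
  assert (HL : L <= 0).
  { destruct (Rle_dec L 0) as [h|h]; auto. exfalso.
    destruct (Hg zs Hzs) as [l Hl].
    set (eps := L / (2 * (18 * (d * d) + 1))).
    assert (Heps : 0 < eps) by (unfold eps; apply Rdiv_lt_0_compat; nra).
    destruct (Hl eps Heps) as [del [Hdel Hdl]].
    destruct (small_pow (6 * d) del ltac:(lra) Hdel) as [n Hn]. specialize (Hn n (Nat.le_refl n)).
    set (dn := d / 2 ^ n).
    pose proof (pow2_gt0 n).
    assert (Hdn : 6 * dn < del) by (unfold dn; unfold Rdiv in *; lra).
    assert (Hdn0 : 0 <= dn) by (unfold dn, Rdiv; apply Rmult_le_pos; [lra | left; apply Rinv_0_lt_compat; auto]).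
    pose proof (Tseq_tri g t0 r n Hg Hr Hbnd) as Htri. fold L in Htri.
    pose proof (Tseq_small g t0 d n Hsm) as Hs. fold dn in Hs.
    pose proof (Tseq_bnd g t0 r n Hbnd) as Hb'.
    pose proof (Hz n) as Hzn. replace (4 * d / 2 ^ n) with (4 * dn) in Hzn by (unfold dn, Rdiv; ring).
    unfold A in Hzn.
    destruct (Tseq g t0 n) as [[a' b'] c']. simpl in Hzn. destruct Hs as [S1 [S2 S3]].
    destruct Hb' as [B1 [B2 B3]].
    assert (Ia : inD a') by (unfold inD; lra). assert (Ib : inD b') by (unfold inD; lra). assert (Ic : inD c') by (unfold inD; lra).
    assert (E1 := side_bound g zs l eps del a' b' a' dn Hg Ia Ib Hdl ltac:(lra)
       ltac:(replace (a' - a')%C with (RtoC 0) by ring; rewrite Cmod_0; lra) S1 Hzn Hdn).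
    assert (E2 := side_bound g zs l eps del b' c' a' dn Hg Ib Ic Hdl ltac:(lra) S1 S2 Hzn Hdn).
    assert (E3 := side_bound g zs l eps del c' a' a' dn Hg Ic Ia Hdl ltac:(lra)
       ltac:(rewrite Cmod_sym; exact S3) S3 Hzn Hdn).
    set (al := (g zs - zs * l)%C) in *.
    assert (Ht : tri g (a', b', c') =
      ((seg g a' b' - (al * (b' - a') + l * (b' * b' - a' * a') * RtoC (/2))) +
       (seg g b' c' - (al * (c' - b') + l * (c' * c' - b' * b') * RtoC (/2))) +
       (seg g c' a' - (al * (a' - c') + l * (a' * a' - c' * c') * RtoC (/2))))%C).
    { simpl. ring. }
    assert (Cmod (tri g (a', b', c')) <= 3 * (eps * (6 * dn) * dn)).
    { rewrite Ht. eapply Rle_trans. apply Cmod_triangle. eapply Rle_trans. apply Rplus_le_compat_r. apply Cmod_triangle. lra. }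
    assert (L / (2 ^ n * 2 ^ n) <= 18 * eps * (d * d) / (2 ^ n * 2 ^ n)).
    { replace (18 * eps * (d * d) / (2 ^ n * 2 ^ n)) with (3 * (eps * (6 * dn) * dn)) by (unfold dn; field; lra). lra. }
    assert (L <= 18 * eps * (d * d)).
    { apply Rmult_le_compat_r with (r := 2 ^ n * 2 ^ n) in H4; [|nra].
      unfold Rdiv in H4. rewrite !Rmult_assoc, !Rinv_l in H4 by nra. lra. }
    unfold eps in H5.
    assert (18 * (L / (2 * (18 * (d * d) + 1))) * (d * d) < L).
    { replace (18 * (L / (2 * (18 * (d * d) + 1))) * (d * d)) with (L * (18 * (d * d) / (2 * (18 * (d * d) + 1)))) by (field; nra).
      assert (18 * (d * d) / (2 * (18 * (d * d) + 1)) < 1).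
      { apply Rmult_lt_reg_r with (2 * (18 * (d * d) + 1)). nra. unfold Rdiv. rewrite Rmult_assoc, Rinv_l by nra. nra. }
      nra. }
    lra. }
  assert (L = 0) by (pose proof (Cmod_ge_0 (tri g t0)); unfold L in *; lra).
  apply Cmod_eq_0. exact H2.
Qed.

Lemma deps_mult F G z a b : deps F z a -> deps G z b ->
  deps (fun w => F w * G w)%C z (a * G z + F z * b)%C.
Proof.
  intros H1 H2. apply is_derive_deps'.
  apply deps_is_derive' in H1. apply deps_is_derive' in H2.
  exact (is_derive_mult (K:=C_AbsRing) F G z a b H1 H2 Cmult_comm).
Qed.

Lemma deps_comp F G z a b : deps F (G z) a -> deps G z b -> deps (fun w => F (G w)) z (b * a)%C.
Proof.
  intros H1 H2. apply is_derive_deps'.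
  apply deps_is_derive' in H1. apply deps_is_derive' in H2.
  exact (is_derive_comp (K:=C_AbsRing) (V:=AbsRing_NormedModule C_AbsRing) F G z a b H1 H2).
Qed.

Lemma deps_local F H z l : (exists rho, 0 < rho /\ forall w, Cmod (w - z)%C < rho -> F w = H w) ->
  deps H z l -> deps F z l.
Proof.
  intros [rho [Hr Hw]] Hd eps He. destruct (Hd eps He) as [d [Hd0 Hd1]].
  exists (Rmin d rho). split. apply Rmin_pos; auto. intros w Hw'.
  rewrite (Hw w), (Hw z). apply Hd1. pose proof (Rmin_l d rho). lra.
  replace (z - z)%C with (RtoC 0) by ring. rewrite Cmod_0; auto.
  pose proof (Rmin_r d rho). lra.
Qed.

Lemma deps_1minus z : deps (fun w => RtoC 1 - w)%C z (RtoC (-1)).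
Proof.
  intros eps He. exists 1. split. lra. intros w _.
  replace (RtoC 1 - w - (RtoC 1 - z) - (w - z) * RtoC (-1))%C with (RtoC 0) by Ceq.
  rewrite Cmod_0. apply Rmult_le_pos; [lra | apply Cmod_ge_0].
Qed.

Lemma Cmod_pos_of_neq z : z <> RtoC 0 -> 0 < Cmod z.
Proof. intros H. destruct (Cmod_ge_0 z) as [h|h]; auto. symmetry in h. apply Cmod_eq_0 in h. contradiction. Qed.

Lemma deps_inv z : z <> RtoC 0 -> deps Cinv z (- / (z * z))%C.
Proof.
  intros Hz eps He.
  set (m := Cmod z). assert (Hm : 0 < m) by (apply Cmod_pos_of_neq; auto).
  exists (Rmin (m / 2) (eps * m * m * m / 2)). split.
  { apply Rmin_pos. lra. apply Rdiv_lt_0_compat; [|lra]. repeat apply Rmult_lt_0_compat; lra. }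
  intros w Hw.
  pose proof (Rmin_l (m / 2) (eps * m * m * m / 2)). pose proof (Rmin_r (m / 2) (eps * m * m * m / 2)).
  assert (Hwm : m / 2 <= Cmod w).
  { replace z with (w - (w - z))%C in Hm by ring. unfold m in *.
    pose proof (Cmod_triangle w (- (w - z))%C). rewrite Cmod_opp in H1.
    replace (w + - (w - z))%C with z in H1 by ring. lra. }
  assert (Hw0 : w <> RtoC 0) by (intros ->; rewrite Cmod_0 in Hwm; lra).
  replace (/ w - / z - (w - z) * - / (z * z))%C with ((w - z) * (w - z) * / (w * z * z))%C by (field; auto).
  rewrite !Cmod_mult, Cmod_inv by (repeat apply Cmult_neq_0; auto).
  rewrite !Cmod_mult. fold m.
  set (e := Cmod (w - z)%C) in *. pose proof (Cmod_ge_0 (w - z)%C). fold e in H1.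
  assert (e * / (Cmod w * m * m) <= eps).
  { assert (Hcw : 0 < Cmod w * m * m) by (repeat apply Rmult_lt_0_compat; lra). apply Rmult_le_reg_r with (Cmod w * m * m). lra. rewrite Rmult_assoc, Rinv_l by lra.
    assert (m / 2 * m * m <= Cmod w * m * m) by (apply Rmult_le_compat_r; nra).
    assert (eps * (m / 2 * m * m) <= eps * (Cmod w * m * m)) by (apply Rmult_le_compat_l; lra). lra. }
  assert (e * e * / (Cmod w * m * m) = e * (e * / (Cmod w * m * m))) by ring.
  nra.
Qed.

Definition gC (f : C -> C) : C -> C := fun w => Cdiv (f w) (Cminus (RtoC 1) w).

Lemma one_minus_neq z : inD z -> (RtoC 1 - z)%C <> RtoC 0.
Proof.
  unfold inD. intros Hz H. assert (z = RtoC 1).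
  { replace z with (RtoC 1 - (RtoC 1 - z))%C by ring. rewrite H. ring. }
  subst. rewrite Cmod_1 in Hz. lra.
Qed.

Lemma gC_holo f : holoD f -> holoE (gC f).
Proof.
  intros Hf z Hz. destruct (Hf z Hz) as [l Hl]. apply is_derive_deps in Hl.
  eexists. unfold gC. unfold Cdiv.
  apply deps_mult. exact Hl.
  apply (deps_comp Cinv (fun w => RtoC 1 - w)%C). apply deps_inv. apply one_minus_neq; auto.
  apply deps_1minus.
Qed.

Lemma G_deriv g z : holoE g -> inD z -> deps (seg g (RtoC 0)) z (g z).
Proof.
  intros Hg Hz eps He.
  assert (H0 : inD (RtoC 0)) by (unfold inD; rewrite Cmod_0; lra).
  destruct (holoE_cont g z Hg Hz eps He) as [d [Hd Hc]].
  exists (Rmin d (1 - Cmod z)). split. apply Rmin_pos; auto. unfold inD in Hz; lra.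
  intros w Hw. pose proof (Rmin_l d (1 - Cmod z)). pose proof (Rmin_r d (1 - Cmod z)).
  assert (Hwd : inD w).
  { unfold inD. replace w with (z + (w - z))%C by ring. pose proof (Cmod_triangle z (w - z)%C). lra. }
  pose proof (goursat g (RtoC 0) z w Hg H0 Hz Hwd) as Hgo. simpl in Hgo.
  rewrite (seg_rev g (RtoC 0) w) in Hgo by (apply ex_D; auto).
  assert (E : seg g z w = (seg g (RtoC 0) w - seg g (RtoC 0) z)%C).
  { transitivity ((seg g (RtoC 0) z + seg g z w + - seg g (RtoC 0) w) + seg g (RtoC 0) w - seg g (RtoC 0) z)%C.
    ring. rewrite Hgo. ring. }
  replace (seg g (RtoC 0) w - seg g (RtoC 0) z - (w - z) * g z)%C with
     (seg g z w - (g z * (w - z) + RtoC 0 * (w * w - z * z) * RtoC (/2)))%C by (rewrite E; ring).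
  apply seg_approx. apply ex_D; auto.
  intros t Ht.
  replace (g (z + RtoC t * (w - z)) - (g z + RtoC 0 * (z + RtoC t * (w - z))))%C with
    (g (z + RtoC t * (w - z)) - g z)%C by ring.
  left. apply Hc. replace (z + RtoC t * (w - z) - z)%C with (RtoC t * (w - z))%C by ring.
  rewrite Cmod_RtoC_mult, Rabs_right by lra. pose proof (Cmod_ge_0 (w - z)%C). nra.
Qed.

Lemma cesaro_0 f : cesaro f (RtoC 0) = f (RtoC 0).
Proof. unfold cesaro. destruct (Ceq_dec (RtoC 0) (RtoC 0)); [reflexivity | congruence]. Qed.

Lemma cesaro_seg f z : z <> RtoC 0 -> cesaro f z = (seg (gC f) (RtoC 0) z * Cinv z)%C.
Proof.
  intros Hz. unfold cesaro. destruct (Ceq_dec z (RtoC 0)); [contradiction|].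
  rewrite Cmult_comm. f_equal. unfold seg, RI, segf, gC.
  apply (RInt_ext (V:=C_R_CompleteNormedModule)). intros t _.
  replace (RtoC 0 + RtoC t * (z - RtoC 0))%C with (RtoC t * z)%C by ring.
  replace (z - RtoC 0)%C with z by ring. reflexivity.
Qed.

Lemma inD0 : inD (RtoC 0).
Proof. unfold inD; rewrite Cmod_0; lra. Qed.

Lemma cesaro_deps f z : holoD f -> inD z -> exists l, deps (cesaro f) z l.
Proof.
  intros Hf Hz. pose proof (gC_holo f Hf) as Hg. set (g := gC f) in *.
  destruct (Ceq_dec z (RtoC 0)) as [->|Hz0].
  - destruct (Hg (RtoC 0) inD0) as [g1 Hg1].
    exists (g1 * RtoC (/2))%C. intros eps He.
    destruct (Hg1 eps He) as [d [Hd Hdd]].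
    exists (Rmin d 1). split. apply Rmin_pos; lra.
    intros w Hw. pose proof (Rmin_l d 1). pose proof (Rmin_r d 1).
    replace (w - RtoC 0)%C with w in * by ring.
    destruct (Ceq_dec w (RtoC 0)) as [->|Hw0].
    { replace (cesaro f (RtoC 0) - cesaro f (RtoC 0) - RtoC 0 * (g1 * RtoC (/ 2)))%C with (RtoC 0) by ring.
      rewrite Cmod_0. lra. }
    assert (Hwd : inD w) by (unfold inD; lra).
    rewrite cesaro_seg by auto. rewrite cesaro_0. fold g.
    assert (Hg0 : g (RtoC 0) = f (RtoC 0)) by (unfold g, gC; unfold Cdiv; replace (RtoC 1 - RtoC 0)%C with (RtoC 1) by ring; rewrite Cinv_1 || idtac; Ceq).
    assert (S := seg_approx g (RtoC 0) w (g (RtoC 0)) g1 (eps * Cmod w) (ex_D g _ _ Hg inD0 Hwd)).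
    assert (Hmw : 0 < Cmod w) by (apply Cmod_pos_of_neq; auto).
    specialize (S ltac:(
      intros t Ht;
      replace (g (RtoC 0 + RtoC t * (w - RtoC 0)) - (g (RtoC 0) + g1 * (RtoC 0 + RtoC t * (w - RtoC 0))))%C
        with (g (RtoC t * w) - g (RtoC 0) - (RtoC t * w - RtoC 0) * g1)%C
        by (replace (RtoC 0 + RtoC t * (w - RtoC 0))%C with (RtoC t * w)%C by ring; ring);
      assert (Ctw : Cmod (RtoC t * w - RtoC 0)%C <= Cmod w) by
        (replace (RtoC t * w - RtoC 0)%C with (RtoC t * w)%C by ring;
         rewrite Cmod_RtoC_mult, Rabs_right by lra; nra);
      eapply Rle_trans; [apply Hdd; lra | apply Rmult_le_compat_l; lra])).
    replace (seg g (RtoC 0) w * / w - f (RtoC 0) - w * (g1 * RtoC (/ 2)))%C with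
      ((seg g (RtoC 0) w - (g (RtoC 0) * (w - RtoC 0) + g1 * (w * w - RtoC 0 * RtoC 0) * RtoC (/ 2))) * / w)%C.
    2:{ rewrite Hg0. field. auto. }
    rewrite Cmod_mult, Cmod_inv by auto.
    assert (E0 : (w - RtoC 0)%C = w) by ring. rewrite !E0 in S. rewrite E0.
    apply Rmult_le_reg_r with (Cmod w); auto. rewrite Rmult_assoc, Rinv_l by lra. lra.
  - exists ((g z * / z) + seg g (RtoC 0) z * (- / (z * z)))%C.
    apply (deps_local _ (fun w => seg g (RtoC 0) w * Cinv w)%C).
    + exists (Cmod z). split. apply Cmod_pos_of_neq; auto.
      intros w Hw. apply cesaro_seg. intros ->. rewrite Cmod_sym in Hw.
      replace (z - RtoC 0)%C with z in Hw by ring. lra.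
    + apply deps_mult. apply G_deriv; auto. apply deps_inv; auto.
Qed.

Lemma cesaro_holo f : holoD f -> holoD (cesaro f).
Proof.
  intros Hf z Hz. destruct (cesaro_deps f z Hf Hz) as [l Hl]. exists l. apply deps_is_derive. exact Hl.
Qed.

Definition c0 := 1 - / exp 1.

Lemma e_facts : 2 < exp 1 /\ exp 1 <= 3.
Proof. split. pose proof (exp_ineq1 1 ltac:(lra)). lra. apply exp_le_3. Qed.

Lemma c0_facts : / 2 < c0 /\ c0 < 1.
Proof.
  destruct e_facts as [H1 H2]. unfold c0.
  assert (/ exp 1 < / 2) by (apply Rinv_lt_contravar; lra).
  assert (0 < / exp 1) by (apply Rinv_0_lt_compat; lra). lra.
Qed.

Lemma mlog_gt1 r : c0 < r -> r < 1 -> 1 < - ln (1 - r).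
Proof.
  intros H1 H2. unfold c0 in H1.
  assert (1 - r < exp (Ropp 1)) by (rewrite exp_Ropp; lra).
  pose proof (ln_increasing (1 - r) (exp (Ropp 1)) ltac:(lra) H). rewrite ln_exp in H0. lra.
Qed.

Lemma mlog_mono r1 r2 : r1 <= r2 -> r2 < 1 -> - ln (1 - r1) <= - ln (1 - r2).
Proof.
  intros H1 H2. destruct (Req_dec r1 r2) as [->|h]. lra.
  pose proof (ln_increasing (1 - r2) (1 - r1) ltac:(lra) ltac:(lra)). lra.
Qed.

Lemma v_small z : Cmod z <= c0 -> v z = 1.
Proof. intros H. unfold v. destruct (Rle_dec (Cmod z) (1 - / exp 1)); auto. unfold c0 in H. contradiction. Qed.

Lemma v_big z : c0 < Cmod z -> v z = / (- ln (1 - Cmod z)).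
Proof. intros H. unfold v. destruct (Rle_dec (Cmod z) (1 - / exp 1)); auto. unfold c0 in H. lra. Qed.

Lemma v_pos z : inD z -> 0 < v z.
Proof.
  intros Hz. unfold inD in Hz. destruct (Rle_dec (Cmod z) c0).
  rewrite v_small; auto; lra. rewrite v_big by lra.
  apply Rinv_0_lt_compat. pose proof (mlog_gt1 (Cmod z) ltac:(lra) Hz). lra.
Qed.

Lemma v_le1 z : inD z -> v z <= 1.
Proof.
  intros Hz. unfold inD in Hz. destruct (Rle_dec (Cmod z) c0).
  rewrite v_small; auto; lra. rewrite v_big by lra.
  pose proof (mlog_gt1 (Cmod z) ltac:(lra) Hz). apply Rle_trans with (/ 1). apply Rinv_le_contravar; lra. rewrite Rinv_1; lra.
Qed.

Lemma v_mono w z : inD z -> Cmod w <= Cmod z -> v z <= v w.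
Proof.
  intros Hz H. unfold inD in Hz. destruct (Rle_dec (Cmod w) c0).
  - rewrite (v_small w) by auto. apply v_le1. exact Hz.
  - rewrite !v_big by lra. pose proof (mlog_gt1 (Cmod w) ltac:(lra) ltac:(lra)).
    apply Rinv_le_contravar. lra. apply mlog_mono; lra.
Qed.

Lemma vk_pos k z : inD z -> 0 < vk k z.
Proof. intros; unfold vk; apply pow_lt, v_pos; auto. Qed.

Lemma f_bound f k M w : inD w -> vk k w * Cmod (f w) <= M -> Cmod (f w) <= M / vk k w.
Proof.
  intros Hw H. pose proof (vk_pos k w Hw). apply Rmult_le_reg_l with (vk k w); auto.
  unfold Rdiv. rewrite (Rmult_comm M), <- Rmult_assoc, Rinv_r by lra. lra.
Qed.

Lemma int_log r : 0 < r < 1 -> is_RInt (fun t => r / (1 - t * r)) 0 1 (- ln (1 - r)).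
Proof.
  intros Hr.
  eapply isR_eq; [| apply (is_RInt_derive (V:=R_CompleteNormedModule) (fun t => - ln (1 - t * r)) (fun t => r / (1 - t * r)))].
  - unfold minus, plus, opp; simpl. replace (1 - 0 * r) with 1 by ring. rewrite ln_1. replace (1 * r) with r by ring. ring.
  - intros x Hx. rewrite Rmin_left, Rmax_right in Hx by lra.
    assert (0 < 1 - x * r) by nra.
    auto_derive. lra. field. lra.
  - intros x Hx. rewrite Rmin_left, Rmax_right in Hx by lra.
    assert (0 < 1 - x * r) by nra.
    apply (ex_derive_continuous (K:=R_AbsRing) (V:=R_NormedModule)). auto_derive. lra.
Qed.

Lemma Cmod_1_minus t z : 0 <= t <= 1 -> 1 - t * Cmod z <= Cmod (RtoC 1 - RtoC t * z)%C.
Proof.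
  intros Ht. pose proof (Cmod_triangle (RtoC 1 - RtoC t * z)%C (RtoC t * z)%C).
  replace (RtoC 1 - RtoC t * z + RtoC t * z)%C with (RtoC 1) in H by ring.
  rewrite Cmod_1, Cmod_RtoC_mult, Rabs_right in H by lra. lra.
Qed.

Lemma cesaro_bound f k M : holoD f -> (forall z, inD z -> vk k z * Cmod (f z) <= M) ->
  forall z, inD z -> vk (S k) z * Cmod (cesaro f z) <= 3 * M.
Proof.
  intros Hf HM z Hz.
  assert (HM0 : 0 <= M).
  { specialize (HM (RtoC 0) inD0). pose proof (vk_pos k (RtoC 0) inD0). pose proof (Cmod_ge_0 (f (RtoC 0))). nra. }
  destruct (Ceq_dec z (RtoC 0)) as [->|Hz0].
  { rewrite cesaro_0. unfold vk in *. rewrite v_small by (rewrite Cmod_0; pose proof c0_facts; lra).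
    specialize (HM (RtoC 0) inD0). rewrite v_small in HM by (rewrite Cmod_0; pose proof c0_facts; lra).
    rewrite pow1 in *. lra. }
  set (r := Cmod z). assert (Hr : 0 < r) by (apply Cmod_pos_of_neq; auto).
  assert (Hr1 : r < 1) by exact Hz.
  rewrite cesaro_seg by auto. rewrite Cmod_mult, Cmod_inv by auto. fold r.
  set (g := gC f).
  pose proof (RI_correct _ _ _ (ex_D g (RtoC 0) z (gC_holo f Hf) inD0 Hz)) as HI.
  fold (seg g (RtoC 0) z) in HI.
  set (B := M / vk k z).
  assert (HB : 0 <= B) by (unfold B, Rdiv; apply Rmult_le_pos; auto; left; apply Rinv_0_lt_compat, vk_pos; auto).
  assert (Hpt : forall t, 0 <= t <= 1 -> Cmod (f (RtoC t * z)%C) <= B).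
  { intros t Ht. assert (Htz : inD (RtoC t * z)%C).
    { unfold inD. rewrite Cmod_RtoC_mult, Rabs_right by lra. fold r. nra. }
    eapply Rle_trans. apply f_bound; auto. unfold B, Rdiv. apply Rmult_le_compat_l; auto.
    apply Rinv_le_contravar. apply vk_pos; auto. unfold vk. apply pow_incr. split.
    left; apply v_pos; auto. apply v_mono; auto. rewrite Cmod_RtoC_mult, Rabs_right by lra. fold r. nra. }
  assert (Hseg : forall t, 0 <= t <= 1 -> segf g (RtoC 0) z t = (f (RtoC t * z) / (RtoC 1 - RtoC t * z) * z)%C).
  { intros t _. unfold segf, g, gC. replace (RtoC 0 + RtoC t * (z - RtoC 0))%C with (RtoC t * z)%C by ring.
    replace (z - RtoC 0)%C with z by ring. reflexivity. }
  destruct (Rle_dec r c0) as [Hs|Hb].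
  -
    assert (Cmod (seg g (RtoC 0) z) <= (1 - 0) * (B * exp 1 * r)).
    { eapply isRI_norm; [lra | | exact HI]. intros t Ht. rewrite Hseg by auto.
      unfold Cdiv. rewrite !Cmod_mult, Cmod_inv.
      2:{ intros H0. pose proof (Cmod_1_minus t z Ht) as H1. rewrite H0, Cmod_0 in H1. fold r in H1. pose proof c0_facts. nra. }
      pose proof (Cmod_1_minus t z Ht) as H1. fold r in H1. fold r.
      pose proof e_facts. unfold c0 in Hs.
      assert (/ exp 1 <= 1 - t * r) by nra.
      assert (/ Cmod (RtoC 1 - RtoC t * z)%C <= exp 1).
      { rewrite <- (Rinv_inv (exp 1)). apply Rinv_le_contravar. apply Rinv_0_lt_compat; lra. lra. }
      pose proof (Hpt t Ht). pose proof (Cmod_ge_0 (f (RtoC t * z)%C)).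
      assert (0 < / exp 1) by (apply Rinv_0_lt_compat; lra). assert (0 <= / Cmod (RtoC 1 - RtoC t * z)%C) by (left; apply Rinv_0_lt_compat; lra).
      apply Rmult_le_compat_r. lra. apply Rmult_le_compat; auto. }
    unfold vk. rewrite v_small by auto. rewrite pow1.
    unfold B, vk in H. rewrite v_small in H by auto. rewrite pow1 in H.
    pose proof e_facts.
    apply Rle_trans with (M * exp 1). 2: nra.
    replace (M / 1) with M in H by field.
    rewrite Rmult_1_l. apply Rmult_le_reg_r with r; auto. rewrite Rmult_assoc, Rinv_l by lra. lra.
  -
    assert (Cmod (seg g (RtoC 0) z) <= B * (- ln (1 - r))).
    { rewrite <- norm_CR. apply (norm_RInt_le (V:=C_R_NormedModule) (segf g (RtoC 0) z) (fun t => B * (r / (1 - t * r))) 0 1 (seg g (RtoC 0) z) (B * - ln (1 - r)) ltac:(lra)).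
      2: exact HI. 2: apply isR_scal; apply int_log; lra.
      intros t Ht. rewrite norm_CR. rewrite Hseg by auto.
      pose proof (Cmod_1_minus t z Ht) as H1. fold r in H1.
      assert (0 < 1 - t * r) by nra.
      unfold Cdiv. rewrite !Cmod_mult, Cmod_inv by (intros H0; rewrite H0, Cmod_0 in H1; lra). fold r.
      pose proof (Hpt t Ht). pose proof (Cmod_ge_0 (f (RtoC t * z)%C)).
      assert (/ Cmod (RtoC 1 - RtoC t * z)%C <= / (1 - t * r)) by (apply Rinv_le_contravar; lra).
      assert (0 <= / Cmod (RtoC 1 - RtoC t * z)%C) by (left; apply Rinv_0_lt_compat; lra).
      unfold Rdiv. replace (B * (r * / (1 - t * r))) with (B * / (1 - t * r) * r) by ring.
      apply Rmult_le_compat_r. lra. apply Rmult_le_compat; auto. }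
    assert (Hv : v z = / (- ln (1 - r))) by (apply v_big; fold r; lra).
    pose proof (mlog_gt1 r ltac:(lra) Hr1) as Hl.
    unfold B in H. unfold vk in *. simpl.
    set (V := v z ^ k) in *.
    assert (HV : 0 < V) by (apply pow_lt, v_pos; auto).
    pose proof c0_facts.
    assert (Hc : Cmod (seg g (RtoC 0) z) * / r <= M / V * (- ln (1 - r)) * 2).
    { apply Rle_trans with (M / V * - ln (1 - r) * / r).
      apply Rmult_le_compat_r; auto. left; apply Rinv_0_lt_compat; auto.
      apply Rmult_le_compat_l. apply Rmult_le_pos; [unfold Rdiv; apply Rmult_le_pos; auto; left; apply Rinv_0_lt_compat; auto | lra].
      rewrite <- (Rinv_inv 2). apply Rinv_le_contravar; lra. }
    apply Rle_trans with (v z * V * (M / V * - ln (1 - r) * 2)).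
    { apply Rmult_le_compat_l. apply Rmult_le_pos; left; auto. apply v_pos; auto. exact Hc. }
    rewrite Hv. replace (/ - ln (1 - r) * V * (M / V * - ln (1 - r) * 2)) with (2 * M) by (field; lra).
    lra.
Qed.

Lemma deps_const (a z : C) : deps (fun _ => a) z (RtoC 0).
Proof.
  intros eps He. exists 1. split. lra. intros w _.
  replace (a - a - (w - z) * RtoC 0)%C with (RtoC 0) by ring. rewrite Cmod_0.
  apply Rmult_le_pos; [lra | apply Cmod_ge_0].
Qed.

Lemma deps_plus F G z a b : deps F z a -> deps G z b -> deps (fun w => F w + G w)%C z (a + b)%C.
Proof.
  intros H1 H2. apply is_derive_deps'.
  apply deps_is_derive' in H1. apply deps_is_derive' in H2.
  exact (is_derive_plus (K:=C_AbsRing) (V:=AbsRing_NormedModule C_AbsRing) F G z a b H1 H2).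
Qed.

Lemma holo_deps f z : holoD f -> inD z -> exists l, deps f z l.
Proof. intros Hf Hz. destruct (Hf z Hz) as [l Hl]. exists l. apply is_derive_deps. exact Hl. Qed.

Lemma holo_of_deps f : (forall z, inD z -> exists l, deps f z l) -> holoD f.
Proof. intros H z Hz. destruct (H z Hz) as [l Hl]. exists l. apply deps_is_derive. exact Hl. Qed.

Lemma holo_add f g : holoD f -> holoD g -> holoD (fadd f g).
Proof.
  intros Hf Hg. apply holo_of_deps. intros z Hz.
  destruct (holo_deps f z Hf Hz) as [a Ha]. destruct (holo_deps g z Hg Hz) as [b Hb].
  exists (a + b)%C. unfold fadd. apply deps_plus; auto.
Qed.

Lemma holo_scal c f : holoD f -> holoD (fscal c f).
Proof.
  intros Hf. apply holo_of_deps. intros z Hz.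
  destruct (holo_deps f z Hf Hz) as [a Ha].
  eexists. unfold fscal. apply (deps_mult (fun _ => c) f). apply deps_const. exact Ha.
Qed.

Lemma holo_const (c : C) : holoD (fun _ => c).
Proof. apply holo_of_deps. intros z _. exists (RtoC 0). apply deps_const. Qed.

Lemma seg_lin_add f1 f2 z : holoD f1 -> holoD f2 -> inD z ->
  seg (gC (fadd f1 f2)) (RtoC 0) z = (seg (gC f1) (RtoC 0) z + seg (gC f2) (RtoC 0) z)%C.
Proof.
  intros H1 H2 Hz.
  pose proof (RI_correct _ _ _ (ex_D _ _ _ (gC_holo f1 H1) inD0 Hz)) as I1.
  pose proof (RI_correct _ _ _ (ex_D _ _ _ (gC_holo f2 H2) inD0 Hz)) as I2.
  apply isRI_unique. eapply isRI_ext; [| apply (isRI_plus _ _ _ _ _ _ I1 I2)].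
  intros t _. unfold segf, gC, fadd, Cdiv. ring.
Qed.

Lemma seg_lin_scal c f z : holoD f -> inD z ->
  seg (gC (fscal c f)) (RtoC 0) z = (c * seg (gC f) (RtoC 0) z)%C.
Proof.
  intros H1 Hz.
  pose proof (RI_correct _ _ _ (ex_D _ _ _ (gC_holo f H1) inD0 Hz)) as I1.
  apply isRI_unique. eapply isRI_ext; [| apply (isRI_Cmult_l _ _ _ _ c I1)].
  intros t _. unfold segf, gC, fscal, Cdiv. ring.
Qed.

Lemma cesaro_add f1 f2 z : holoD f1 -> holoD f2 -> inD z ->
  cesaro (fadd f1 f2) z = (cesaro f1 z + cesaro f2 z)%C.
Proof.
  intros H1 H2 Hz. destruct (Ceq_dec z (RtoC 0)) as [->|Hz0].
  - rewrite !cesaro_0. reflexivity.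
  - rewrite !cesaro_seg by auto. rewrite seg_lin_add by auto. ring.
Qed.

Lemma cesaro_scal c f z : holoD f -> inD z -> cesaro (fscal c f) z = (c * cesaro f z)%C.
Proof.
  intros H1 Hz. destruct (Ceq_dec z (RtoC 0)) as [->|Hz0].
  - rewrite !cesaro_0. reflexivity.
  - rewrite !cesaro_seg by auto. rewrite seg_lin_scal by auto. ring.
Qed.

Lemma vk_mono k m z : inD z -> (k <= m)%nat -> vk m z <= vk k z.
Proof.
  intros Hz Hkm. unfold vk. pose proof (v_pos z Hz). pose proof (v_le1 z Hz).
  replace m with (k + (m - k))%nat by lia. rewrite pow_add.
  assert (0 < v z ^ k) by (apply pow_lt; auto).
  assert (v z ^ (m - k) <= 1) by (apply pow_le_1_compat_r || (rewrite <- (pow1 (m - k)); apply pow_incr; lra)).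
  nra.
Qed.

Lemma inHk_mono k m f : (k <= m)%nat -> inHk k f -> inHk m f.
Proof.
  intros Hkm [Hf [M HM]]. split; auto. exists M. intros z Hz.
  eapply Rle_trans; [| apply (HM z Hz)]. apply Rmult_le_compat_r. apply Cmod_ge_0. apply vk_mono; auto.
Qed.

Lemma inHk_add k f g : inHk k f -> inHk k g -> inHk k (fadd f g).
Proof.
  intros [Hf [M1 H1]] [Hg [M2 H2]]. split. apply holo_add; auto.
  exists (M1 + M2). intros z Hz. unfold fadd. pose proof (vk_pos k z Hz).
  pose proof (Cmod_triangle (f z) (g z)). specialize (H1 z Hz). specialize (H2 z Hz). nra.
Qed.

Lemma inHk_scal k c f : inHk k f -> inHk k (fscal c f).
Proof.
  intros [Hf [M H1]]. split. apply holo_scal; auto.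
  exists (Cmod c * M). intros z Hz. unfold fscal. rewrite Cmod_mult. pose proof (Cmod_ge_0 c).
  specialize (H1 z Hz). replace (vk k z * (Cmod c * Cmod (f z))) with (Cmod c * (vk k z * Cmod (f z))) by ring.
  apply Rmult_le_compat_l; auto.
Qed.

Lemma inVH_add f g : inVH f -> inVH g -> inVH (fadd f g).
Proof.
  intros [k1 [Hk1 H1]] [k2 [Hk2 H2]]. exists (Nat.max k1 k2). split. lia.
  apply inHk_add; [apply (inHk_mono k1) | apply (inHk_mono k2)]; auto; lia.
Qed.

Lemma inVH_scal c f : inVH f -> inVH (fscal c f).
Proof. intros [k [Hk H]]. exists k. split; auto. apply inHk_scal; auto. Qed.

Lemma inVH_holo f : inVH f -> holoD f.
Proof. intros [k [_ [H _]]]. exact H. Qed.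

Lemma cesaro_Hk k f : inHk k f -> inHk (S k) (cesaro f).
Proof.
  intros [Hf [M HM]]. split. apply cesaro_holo; auto.
  exists (3 * M). apply cesaro_bound; auto.
Qed.

Lemma null_inHk k h : (forall z, inD z -> h z = RtoC 0) -> inHk k h /\ forall z, inD z -> vk k z * Cmod (h z) <= 0.
Proof.
  intros H.
  assert (Hb : forall z, inD z -> vk k z * Cmod (h z) <= 0) by (intros z Hz; rewrite H, Cmod_0 by auto; lra).
  split; auto. split.
  - apply holo_of_deps. intros z Hz. exists (RtoC 0).
    apply (deps_local _ (fun _ => RtoC 0)).
    + exists (1 - Cmod z). split. unfold inD in Hz; lra. intros w Hw. apply H.
      unfold inD. replace w with (z + (w - z))%C by ring. pose proof (Cmod_triangle z (w - z)%C). lra.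
    + apply deps_const.
  - exists 0. exact Hb.
Qed.

Definition u (n : nat) : C -> C := Nat.iter n cesaro (fun _ : C => RtoC 1).

Lemma u_S n : u (S n) = cesaro (u n).
Proof. reflexivity. Qed.

Lemma u_Hk n : inHk n (u n).
Proof.
  induction n.
  - split. apply holo_const. exists 1. intros z _. simpl. unfold vk. simpl. rewrite Cmod_1. lra.
  - rewrite u_S. apply cesaro_Hk. exact IHn.
Qed.

Definition ell (x : R) := - ln (1 - x).

Lemma ell_nonneg x : 0 <= x < 1 -> 0 <= ell x.
Proof.
  intros Hx. unfold ell. destruct (Req_dec x 0) as [->|h].
  replace (1 - 0) with 1 by ring. rewrite ln_1. lra.
  pose proof (ln_increasing (1 - x) 1 ltac:(lra) ltac:(lra)). rewrite ln_1 in H. lra.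
Qed.

Lemma lower_int n x : 0 < x < 1 ->
  is_RInt (fun t => ell (t * x) ^ n / INR (Factorial.fact n) * (x / (1 - t * x))) 0 1 (ell x ^ S n / INR (Factorial.fact (S n))).
Proof.
  intros Hx.
  eapply isR_eq; [| apply (is_RInt_derive (V:=R_CompleteNormedModule) (fun t => ell (t * x) ^ S n / INR (Factorial.fact (S n))))].
  - unfold minus, plus, opp; simpl. unfold ell. replace (1 - 0 * x) with 1 by ring. rewrite ln_1.
    replace (1 * x) with x by ring. unfold Rdiv. ring.
  - intros t Ht. rewrite Rmin_left, Rmax_right in Ht by lra. assert (0 < 1 - t * x) by nra.
    unfold ell. auto_derive. lra.
    assert (Hf : INR (Factorial.fact n + n * Factorial.fact n) = INR (S n) * INR (Factorial.fact n))
      by (rewrite <- mult_INR; f_equal).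
    rewrite Hf. pose proof (INR_fact_neq_0 n).
    destruct n as [|m].
    + simpl. replace (1 + - (t * x)) with (1 - t * x) by ring. field. lra.
    + rewrite !S_INR. pose proof (pos_INR m). replace (1 + - (t * x)) with (1 - t * x) by ring. field. repeat split; lra.
  - intros t Ht. rewrite Rmin_left, Rmax_right in Ht by lra. assert (0 < 1 - t * x) by nra.
    apply (ex_derive_continuous (K:=R_AbsRing) (V:=R_NormedModule)). unfold ell. auto_derive. lra.
Qed.

Lemma real_div_mult (a d y : R) : d <> 0 -> (RtoC a / RtoC d * RtoC y)%C = RtoC (a / d * y).
Proof. intros Hd. apply injective_projections; unfold Cdiv, Cinv, Cmult, RtoC; simpl; field; auto. Qed.

Lemma u_real n : forall x, 0 <= x < 1 -> Im (u n (RtoC x)) = 0 /\ ell x ^ n / INR (Factorial.fact n) <= Re (u n (RtoC x)).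
Proof.
  induction n.
  - intros x Hx. simpl. split. reflexivity. lra.
  - intros x Hx. rewrite u_S.
    pose proof (u_Hk n) as [Hh _].
    destruct (Req_dec x 0) as [->|Hx0].
    + rewrite cesaro_0. destruct (IHn 0 ltac:(lra)) as [H1 H2]. split; auto.
      unfold ell in *. replace (1 - 0) with 1 in * by ring. rewrite ln_1 in *.
      replace (- 0) with 0 in * by ring. rewrite pow_i in * by lia.
      pose proof (INR_fact_neq_0 n). pose proof (pos_INR (Factorial.fact n)).
      assert (0 <= 0 ^ n / INR (Factorial.fact n)) by (unfold Rdiv; apply Rmult_le_pos; [apply pow_le; lra | left; apply Rinv_0_lt_compat; lra]).
      unfold Rdiv at 1. rewrite Rmult_0_l. lra.
    + assert (Hxp : 0 < x < 1) by lra.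
      assert (HxC : RtoC x <> RtoC 0) by (intros H; apply RtoC_inj in H; lra).
      assert (HxD : inD (RtoC x)) by (unfold inD; rewrite Cmod_R, Rabs_right; lra).
      rewrite cesaro_seg by auto.
      set (g := gC (u n)).
      pose proof (RI_correct _ _ _ (ex_D g (RtoC 0) (RtoC x) (gC_holo _ Hh) inD0 HxD)) as HI.
      fold (seg g (RtoC 0) (RtoC x)) in HI. set (I := seg g (RtoC 0) (RtoC x)) in *.
      assert (Hpt : forall t, 0 < t < 1 -> segf g (RtoC 0) (RtoC x) t = RtoC (Re (u n (RtoC (t * x))) / (1 - t * x) * x)).
      { intros t Ht. assert (0 < 1 - t * x) by nra.
        unfold segf, g, gC. replace (RtoC 0 + RtoC t * (RtoC x - RtoC 0))%C with (RtoC (t * x)) by Ceq.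
        destruct (IHn (t * x) ltac:(nra)) as [Him _].
        destruct (u n (RtoC (t * x))) as [a1 a2] eqn:E. simpl in Him. subst a2. simpl.
        replace (RtoC x - RtoC 0)%C with (RtoC x) by Ceq.
        replace (RtoC 1 - RtoC (t * x))%C with (RtoC (1 - t * x)) by Ceq.
        change (a1, 0) with (RtoC a1). apply real_div_mult. lra. }
      assert (HIm : Im I = 0).
      { pose proof (isRI_Im _ _ _ _ HI) as H1.
        assert (H2 : is_RInt (fun t => Im (segf g (RtoC 0) (RtoC x) t)) 0 1 0).
        { apply (is_RInt_ext (fun _ => 0)). intros t Ht. rewrite Rmin_left, Rmax_right in Ht by lra.
          rewrite Hpt by auto. reflexivity.
          eapply isR_eq; [| exact (is_RInt_const (V:=R_NormedModule) 0 1 0)]. unfold scal; simpl; unfold mult; simpl; ring. }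
        apply (is_RInt_unique (V:=R_CompleteNormedModule)) in H1. apply (is_RInt_unique (V:=R_CompleteNormedModule)) in H2. rewrite <- H1. exact H2. }
      assert (HRe : ell x ^ S n / INR (Factorial.fact (S n)) <= Re I).
      { apply (is_RInt_le _ _ 0 1 _ _ ltac:(lra) (lower_int n x Hxp) (isRI_Re _ _ _ _ HI)).
        intros t Ht. rewrite Hpt by auto. simpl.
        destruct (IHn (t * x) ltac:(nra)) as [_ H2].
        assert (0 < 1 - t * x) by nra.
        replace (Re (u n (RtoC (t * x))) / (1 - t * x) * x) with (Re (u n (RtoC (t * x))) * (x / (1 - t * x))) by (field; lra).
        apply Rmult_le_compat_r; auto. unfold Rdiv; apply Rmult_le_pos; [lra | left; apply Rinv_0_lt_compat; lra]. }
      assert (Hpos : 0 <= ell x ^ S n / INR (Factorial.fact (S n))).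
      { unfold Rdiv. apply Rmult_le_pos. apply pow_le, ell_nonneg; lra.
        left; apply Rinv_0_lt_compat. pose proof (INR_fact_neq_0 (S n)). pose proof (pos_INR (Factorial.fact (S n))). lra. }
      assert (Hi : 0 <= Re I) by lra.
      destruct I as [i1 i2]. change (Im (i1, i2)) with i2 in HIm. change (Re (i1, i2)) with i1 in HRe, Hi. subst i2.
      assert (E : ((i1, 0) * / RtoC x)%C = RtoC (i1 / x)).
      { apply injective_projections; unfold Cinv, Cmult, RtoC; simpl; field; lra. }
      rewrite E. simpl. split. reflexivity.
      apply Rle_trans with i1; auto.
      apply Rmult_le_reg_r with x. lra. unfold Rdiv. rewrite Rmult_assoc, Rinv_l by lra. nra.
Qed.

Lemma open_sat O : VH_open O -> forall u u', O u -> (forall z, inD z -> u' z = u z) -> O u'.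
Proof.
  intros [_ HO2] u u' Hu Heq.
  destruct (HO2 u Hu) as [V [[_ [_ HV3]] HV]].
  destruct (HV3 1%nat (le_n 1)) as [eps [He Hball]].
  set (h := fun z => (u' z - u z)%C).
  assert (Hh0 : forall z, inD z -> h z = RtoC 0) by (intros z Hz; unfold h; rewrite Heq by auto; ring).
  destruct (null_inHk 1 h Hh0) as [Hh Hhb].
  assert (V h) by (apply Hball; auto; intros z Hz; specialize (Hhb z Hz); lra).
  specialize (HV h H).
  replace u' with (fadd u h); auto.
  apply functional_extensionality. intros z. unfold fadd, h. ring.
Qed.

Lemma part3 k : (1 <= k)%nat -> exists f : CC -> CC, inHk k f /\ ~ inHk k (cesaro f).
Proof.
  intros Hk. exists (u k). split. apply u_Hk. rewrite <- u_S.
  intros [_ [M HM]].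
  set (F := INR (Factorial.fact (S k))).
  assert (HF : 0 < F) by (unfold F; pose proof (INR_fact_neq_0 (S k)); pose proof (pos_INR (Factorial.fact (S k))); lra).
  set (T := Rmax 2 (Rabs M * F + 1)).
  assert (HT2 : 2 <= T) by apply Rmax_l.
  assert (HT3 : Rabs M * F + 1 <= T) by apply Rmax_r.
  set (x := 1 - exp (- T)).
  assert (He1 : exp (- T) < exp (Ropp 1)) by (apply exp_increasing; lra).
  assert (He0 : 0 < exp (- T)) by apply exp_pos.
  assert (Hx1 : exp (Ropp 1) < 1) by (apply Rlt_le_trans with (exp 0); [apply exp_increasing; lra | rewrite exp_0; lra]).
  assert (Hx : 0 < x < 1) by (unfold x; lra).
  assert (Hell : ell x = T) by (unfold ell, x; replace (1 - (1 - exp (- T))) with (exp (- T)) by ring; rewrite ln_exp; ring).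
  assert (HxD : inD (RtoC x)) by (unfold inD; rewrite Cmod_R, Rabs_right; lra).
  assert (Hv : v (RtoC x) = / T).
  { rewrite v_big; rewrite Cmod_R, Rabs_right by lra. fold (ell x). rewrite Hell. reflexivity.
    unfold c0. rewrite <- exp_Ropp. unfold x. lra. }
  destruct (u_real (S k) x ltac:(lra)) as [_ Hre].
  rewrite Hell in Hre. fold F in Hre.
  specialize (HM (RtoC x) HxD). unfold vk in HM. rewrite Hv, pow_inv in HM.
  pose proof (re_le_Cmod (u (S k) (RtoC x))) as Hc.
  pose proof (Rle_abs (Re (u (S k) (RtoC x)))) as Hc2.
  assert (HTk : 0 < T ^ k) by (apply pow_lt; lra).
  assert (T ^ S k / F <= Cmod (u (S k) (RtoC x))) by lra.
  assert (/ T ^ k * (T ^ S k / F) <= M).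
  { eapply Rle_trans; [| exact HM]. apply Rmult_le_compat_l; auto. left; apply Rinv_0_lt_compat; auto. }
  replace (/ T ^ k * (T ^ S k / F)) with (T / F) in H0 by (simpl; field; lra).
  assert (T <= M * F).
  { apply Rmult_le_compat_r with (r := F) in H0; [| lra]. unfold Rdiv in H0. rewrite Rmult_assoc, Rinv_l in H0 by lra. lra. }
  pose proof (Rle_abs M). nra.
Qed.

Theorem proposition2p2 :
  (* C maps VH(D) into itself *)
  (forall f : CC -> CC, inVH f -> inVH (cesaro f)) /\
  (* C : VH(D) -> VH(D) is continuous: preimages of open sets are open *)
  (forall O : (CC -> CC) -> Prop, VH_open O ->
     VH_open (fun f => inVH f /\ O (cesaro f))) /\
  (* for each k in N, C does not map H^infty_{v_k} into itself *)
  (forall k : nat, (1 <= k)%nat ->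
     exists f : CC -> CC, inHk k f /\ ~ inHk k (cesaro f)).
Proof.
  split; [| split].
  - intros f [k [Hk H]]. exists (S k). split. lia. apply cesaro_Hk; auto.
  - intros O HO. split.
    + intros f [Hf _]; exact Hf.
    + intros f [Hf Hcf]. pose proof HO as [HO1 HO2].
      destruct (HO2 (cesaro f) Hcf) as [W [[HW1 [HW2 HW3]] HWO]].
      exists (fun g => inVH g /\ exists w, W w /\ forall z, inD z -> cesaro g z = w z).
      split.
      * split. intros g [Hg _]; exact Hg. split.
        -- intros g1 g2 a b [Hg1 [w1 [Hw1 E1]]] [Hg2 [w2 [Hw2 E2]]] Hab. split.
           apply inVH_add; apply inVH_scal; auto.
           exists (fadd (fscal a w1) (fscal b w2)). split. apply HW2; auto.
           intros z Hz. pose proof (inVH_holo _ Hg1). pose proof (inVH_holo _ Hg2).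
           rewrite cesaro_add by (auto; apply holo_scal; auto).
           rewrite !cesaro_scal by auto. rewrite E1, E2 by auto. reflexivity.
        -- intros k Hk. destruct (HW3 (S k) ltac:(lia)) as [eps [He Hb]].
           exists (eps / 3). split. lra. intros g Hg Hgb. split. exists k; auto.
           exists (cesaro g). split; [| auto]. apply Hb. apply cesaro_Hk; auto.
           intros z Hz. eapply Rle_trans. apply (cesaro_bound g k (eps / 3)); auto. destruct Hg; auto. lra.
      * intros g [Hg [w [Hw E]]]. split. apply inVH_add; auto.
        apply (open_sat O HO (fadd (cesaro f) w)). apply HWO; auto.
        intros z Hz. rewrite cesaro_add by (auto; apply inVH_holo; auto). unfold fadd. rewrite E by auto. reflexivity.
  - apply part3.
Qed.
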